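(* Let $G=(V,E)$ be a directed graph with a partition of $V$ into disjoint regions $R_1,\dots,R_k$, let $f\in\mathbb{N}$, $\ell=2f+1$, $V'=V\times[\ell]$, $v_i=(v,i)$, $P(v_i)=v$, and $E'=\bigcup_{e\in E}E'_e$ where for $e=(v,w)\in E$, $E'_e=\{(v_i,w_i): i\in[\ell]\}$ if $v,w$ lie in the same region and $E'_e=\{(v_i,w_j): i,j\in[\ell]\}$ otherwise. For $v'\in V'$ and $(w,P(v'))\in E$ let $N_{v'}(w)=\{w'\in V': P(w')=w,\ (w',v')\in E'\}$. Let $A$ be a scheduling algorithm on $G$ and $A'$ the algorithm in which each non-faulty $v'\in V'$: (1) initializes local copies of the state variables of $P(v')$ as in $A$; (2) in each round sends on each link $(v',w')\in E'$ the message $P(v')$ would send on $(P(v'),P(w'))$ under $A$ according to its local state; (3) updates its state in each round as if $P(v')$ received, for each $(w,P(v'))\in E$, the message sent by the majority of the nodes in $N_{v'}(w)$. Let $F'\subseteq V'$ be a set of Byzantine nodes such that for each $k'\in[k]$ there are at least $f+1$ indices $i\in[\ell]$ with $\{v_i:v\in R_{k'}\}\cap F'=\emptyset$. Then $A'$ simulates $A$: assuming each non-faulty $v'$ receives the same environment input as $P(v')$, for each $v\in V$ a strict majority of its copies $v_1,\dots,v_\ell$ compute in every round the state of $v$ in the fault-free execution of $A$ on $G$.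
   Context: Networks are synchronous directed graphs running a scheduling algorithm (each round: send messages on outgoing links based on state, then update state from received messages and environment input). Byzantine faulty nodes may behave arbitrarily. $[\ell]=\{1,\dots,\ell\}$. *)

(* Defs.v *)
From mathcomp Require Import all_boot.
Set Implicit Arguments. Unset Strict Implicit. Unset Printing Implicit Defensive.

(* ell = 2f+1; the index set [ell] is modelled as 'I_(ell f) = {0,...,2f} *)
Definition ell (f : nat) : nat := (2 * f + 1)%N.

Definition EP (V : finType) (k f : nat) (E : rel V) (region : V -> 'I_k) :
  rel (V * 'I_(ell f)) :=
  fun u w => E u.1 w.1 && ((region u.1 != region w.1) || (u.2 == w.2)).

Definition maj (M : eqType) (s : seq M) : option M :=
  ohead [seq m <- s | size s < 2 * count_mem m s].

(* A scheduling algorithm on G=(V,E) is given by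
   init   : initial state of each node,
   send v w s : message v sends on link (v,w) when in state s,
   update v s rcv x : new state of v from old state s, received messages
     rcv w (Some m for an in-neighbour w, None otherwise), environment input x. *)
Fixpoint execA (V : finType) (S M I : Type) (E : rel V) (init : V -> S)
  (send : V -> V -> S -> M) (update : V -> S -> (V -> option M) -> I -> S)
  (input : nat -> V -> I) (r : nat) : V -> S :=
  match r with
  | 0 => init
  | r'.+1 => fun v =>
      update v (execA E init send update input r' v)
        (fun w => if E w v then Some (send w v (execA E init send update input r' w))
                  else None)
        (input r' v)
  end.

(* Faulty nodes u' send arbitrary messages byz r u' v' (per round and per link).
   Non-faulty v' keeps a local copy of the state of P(v') = v'.1, sends what P(v')
   would send, and updates as P(v') would, using for each in-neighbour w of P(v')
   the majority message among N_{v'}(w) = {w' | P(w') = w, (w',v') in E'}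
   (None = "no message", if no strict majority exists), and input of P(v'). *)
Fixpoint execA' (V : finType) (S : Type) (M : eqType) (I : Type) (k f : nat)
  (E : rel V) (region : V -> 'I_k) (init : V -> S)
  (send : V -> V -> S -> M) (update : V -> S -> (V -> option M) -> I -> S)
  (input : nat -> V -> I) (F' : {set (V * 'I_(ell f))})
  (byz : nat -> V * 'I_(ell f) -> V * 'I_(ell f) -> M)
  (r : nat) : V * 'I_(ell f) -> S :=
  match r with
  | 0 => fun v' => init v'.1
  | r'.+1 => fun v' =>
      update v'.1 (execA' E region init send update input F' byz r' v')
        (fun w =>
           if E w v'.1 then
             maj [seq (if u \in F' then byz r' u v'
                       else send u.1 v'.1
                              (execA' E region init send update input F' byz r' u))
                 | u <- enum [pred u : V * 'I_(ell f) | (u.1 == w) && EP E region u v']]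
           else None)
        (input r' v'.1)
  end.

(* Main.v *)
Require Import Defs.
From mathcomp Require Import all_boot zify.
From Stdlib Require Import FunctionalExtensionality.

Lemma maj_some (M : eqType) (s : seq M) (m : M) :
  size s < 2 * count_mem m s -> maj s = Some m.
Proof.
move=> H; rewrite /maj.
have Hin : m \in [seq x <- s | size s < 2 * count_mem x s].
  rewrite mem_filter H /= -has_pred1 has_count.
  by case: (count_mem m s) H => [|n]; rewrite ?muln0.
case E: [seq x <- s | size s < 2 * count_mem x s] Hin => [|x t] //= _.
have : x \in [seq x <- s | size s < 2 * count_mem x s] by rewrite E inE eqxx.
rewrite mem_filter => /andP [Hx _].
case: (eqVneq x m) => [->//|nxm].
have := count_predUI (pred1 m) (pred1 x) s.
have -> : count (predI (pred1 m) (pred1 x)) s = 0.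
  apply/eqP; rewrite -leqn0 leqNgt -has_count; apply/hasP => -[y _ /= /andP [/eqP -> /eqP]].
  by move=> e; rewrite e eqxx in nxm.
move=> e; have := count_size (predU (pred1 m) (pred1 x)) s.
rewrite addn0 in e; rewrite e => Hle.
exfalso; lia.
Qed.

Theorem lemma8 (V : finType) (E : rel V) (k : nat) (region : V -> 'I_k)
  (f : nat) (S : Type) (M : eqType) (I : Type)
  (init : V -> S) (send : V -> V -> S -> M)
  (update : V -> S -> (V -> option M) -> I -> S)
  (input : nat -> V -> I)
  (F' : {set (V * 'I_(ell f))})
  (byz : nat -> V * 'I_(ell f) -> V * 'I_(ell f) -> M) :
  (forall k' : 'I_k,
     f + 1 <= #|[set i : 'I_(ell f) |
                 [forall v : V, (region v == k') ==> ((v, i) \notin F')]]|) ->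
  forall v : V,
    exists Idx : {set 'I_(ell f)},
      ell f < 2 * #|Idx| /\
      forall i, i \in Idx ->
        (v, i) \notin F' /\
        forall r : nat,
          execA' E region init send update input F' byz r (v, i) =
          execA E init send update input r v.
Proof.
move=> Hgood.
pose Good k' := [set i : 'I_(ell f) |
                 [forall v : V, (region v == k') ==> ((v, i) \notin F')]].
have GoodNF : forall w j, j \in Good (region w) -> (w, j) \notin F'.
  by move=> w j; rewrite inE => /forallP /(_ w); rewrite eqxx.
have main : forall r (u : V * 'I_(ell f)), u.2 \in Good (region u.1) ->
    execA' E region init send update input F' byz r u =
    execA E init send update input r u.1.
  elim=> [//|r IH] [v i] /= Hi.
  rewrite IH //; congr update; apply: functional_extensionality => w /=.
  case Ewv: (E w v) => //.
  apply: maj_some.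
  rewrite size_map count_map -cardE.
  case: (eqVneq (region w) (region v)) => Hreg.
  -
    set P := [pred u : V * 'I_(ell f) | _].
    have HP : P =i pred1 (w, i).
      case=> w' j; rewrite !inE /EP /= xpair_eqE.
      case: (eqVneq w' w) => [->|] /=; last by [].

      by rewrite Ewv Hreg eqxx.
    rewrite (eq_card HP) card1.
    have Hwi : (w, i) \in enum P by rewrite mem_enum HP inE.
    apply: (@leq_trans 2) => //; rewrite -{1}(muln1 2) leq_pmul2l // -has_count; apply/hasP; exists (w, i) => //=.
    have Hi' : i \in Good (region w) by rewrite Hreg.
    by rewrite (negbTE (GoodNF _ _ Hi')) IH.
  - set P := [pred u : V * 'I_(ell f) | _].
    set a := (X in count X _).
    have Hsz : #|P| <= ell f.
      apply: (@leq_trans #|[set (w, j) | j : 'I_(ell f)]|).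
        apply: subset_leq_card; apply/subsetP => -[w' j]; rewrite !inE /=.
        by move=> /andP [/eqP -> _]; apply/imsetP; exists j.
      by rewrite (leq_trans (leq_imset_card _ _)) // card_ord.
    have Hcnt : f + 1 <= count a (enum P).
      rewrite -size_filter -(card_uniqP _); last by rewrite filter_uniq ?enum_uniq.
      apply: (leq_trans (Hgood (region w))).
      rewrite -[X in X <= _](card_imset _ (fun j1 j2 (e : (w, j1) = (w, j2)) => congr1 snd e)) -/(Good (region w)).
      apply: subset_leq_card; apply/subsetP => u /imsetP [j Hj ->].
      rewrite mem_filter mem_enum !inE /EP /= eqxx Ewv Hreg /=.
      by rewrite /a /= (negbTE (GoodNF _ _ Hj)) (IH (w, j)) ?eqxx.
    apply: (leq_ltn_trans Hsz); rewrite /ell.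
    apply: (leq_trans _ (leq_mul (leqnn 2) Hcnt)); lia.
move=> v; exists (Good (region v)); split.
  have := Hgood (region v); rewrite -/(Good _) /ell => H.
  apply: (leq_trans _ (leq_mul (leqnn 2) H)); lia.
move=> i Hi; split; first exact: GoodNF.
by move=> r; apply: (main r (v, i)).
Qed.
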